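(* Let $L$ be a loss function satisfying axioms (A1)–(A7) listed in the context. Then there is a real constant $K$ such that for every finite variable set $V$, every state $\mathbf x\in\{0,1\}^V$ and every $\mathbf p\in[0,1]^V$, $$L(\mathbf x,\mathbf p)=-K\Big(\sum_{i:\,\mathbf x\models X_i}\log\mathbf p_i+\sum_{i:\,\mathbf x\models\neg X_i}\log(1-\mathbf p_i)\Big).$$
   Context: For a finite set $V$ of Boolean variables, a sentence over $V$ is a propositional formula built from variables in $V$; $\mathit{true}$ is the constant true sentence. A state $\mathbf x\in\{0,1\}^V$ is identified both with the sentence conjoining the literals it makes true and with a vector in $[0,1]^V$. A loss function $L$ assigns to every $\mathbf p\in[0,1]^V$ and every sentence $\alpha$ with variables in $V$ a value $L(\alpha,\mathbf p)\in\mathbb R\cup\{+\infty\}$; $-\log 0=+\infty$. $\alpha\models\beta$ means every state satisfying $\alpha$ satisfies $\beta$. For disjoint $X,Y$, $[\mathbf p\,\mathbf q]$ is the concatenation of $\mathbf p\in[0,1]^X$, $\mathbf q\in[0,1]^Y$. (A1) Truth: $L(\mathit{true},\mathbf p)=0$ for all $\mathbf p$. (A2) Additive independence: for $\alpha$ over $X$, $\beta$ over $Y$, $X\cap Y=\emptyset$: $L(\alpha\wedge\beta,[\mathbf p\,\mathbf q])=L(\alpha,\mathbf p)+L(\beta,\mathbf q)$. (A3) Monotonicity: $\alpha\models\beta$ implies $L(\alpha,\mathbf p)\ge L(\beta,\mathbf p)$. (A4) Identity: $L(\mathbf x,\mathbf x)=0$ for every state $\mathbf x$. (A5) Label-literal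 correspondence: for each variable $X$ there are real constants $K_X,K'_X$ with $L(X,p)=-K_X\log p$ and $L(\neg X,p)=-K'_X\log(1-p)$ for all $p\in[0,1]$ (vectors over $\{X\}$). (A6) Value symmetry: $L(\alpha,\mathbf p)=L(\bar\alpha,\mathbf 1-\mathbf p)$, where $\bar\alpha$ replaces each variable by its negation. (A7) Variable symmetry: for a permutation $\pi$ of the variable set of $\mathbf p$, $L(\alpha,\mathbf p)=L(\pi(\alpha),\pi(\mathbf p))$. *)

(* Defs.v *)
From HB Require Import structures.
From mathcomp Require Import all_boot all_order all_algebra.
From mathcomp Require Import finmap fingroup perm.
From mathcomp Require Import all_classical all_reals all_analysis.

Set Implicit Arguments.
Unset Strict Implicit.
Unset Printing Implicit Defensive.

Import Order.TTheory GRing.Theory Num.Theory.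
Local Open Scope ring_scope.
Local Open Scope fset_scope.

Inductive form : Type :=
  | FTrue
  | FFalse
  | FVar of nat
  | FNot of form
  | FAnd of form & form
  | FOr of form & form
  | FImp of form & form.

Fixpoint vars (a : form) : seq nat :=
  match a with
  | FTrue | FFalse => [::]
  | FVar n => [:: n]
  | FNot b => vars b
  | FAnd b c | FOr b c | FImp b c => vars b ++ vars c
  end.

Definition over (V : {fset nat}) (a : form) : Prop := {subset vars a <= V}.

Fixpoint eval (s : nat -> bool) (a : form) : bool :=
  match a with
  | FTrue => true
  | FFalse => false
  | FVar n => s n
  | FNot b => ~~ eval s b
  | FAnd b c => eval s b && eval s c
  | FOr b c => eval s b || eval s c
  | FImp b c => eval s b ==> eval s c
  end.

Definition entails (a b : form) : Prop := forall s : nat -> bool, eval s a -> eval s b.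

Fixpoint negvars (a : form) : form :=
  match a with
  | FTrue => FTrue
  | FFalse => FFalse
  | FVar n => FNot (FVar n)
  | FNot b => FNot (negvars b)
  | FAnd b c => FAnd (negvars b) (negvars c)
  | FOr b c => FOr (negvars b) (negvars c)
  | FImp b c => FImp (negvars b) (negvars c)
  end.

Fixpoint rename (f : nat -> nat) (a : form) : form :=
  match a with
  | FTrue => FTrue
  | FFalse => FFalse
  | FVar n => FVar (f n)
  | FNot b => FNot (rename f b)
  | FAnd b c => FAnd (rename f b) (rename f c)
  | FOr b c => FOr (rename f b) (rename f c)
  | FImp b c => FImp (rename f b) (rename f c)
  end.

Section Vectors.
Variable R : realType.

Definition lossfun := forall V : {fset nat}, (V -> R) -> form -> \bar R.

Definition in01 (V : {fset nat}) (p : V -> R) : Prop :=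
  forall i : V, 0 <= p i <= 1.

Definition ext (V : {fset nat}) (p : V -> R) (n : nat) : R :=
  match (insub n : option V) with Some x => p x | None => 0 end.

Definition concat (X Y : {fset nat}) (p : X -> R) (q : Y -> R) : (X `|` Y) -> R :=
  fun z => if val z \in X then ext p (val z) else ext q (val z).

(* extension of a state over V to all variables (value outside V irrelevant) *)
Definition extb (V : {fset nat}) (x : V -> bool) (n : nat) : bool :=
  match (insub n : option V) with Some y => x y | None => false end.

(* a state x in {0,1}^V as a sentence: the conjunction of the literals it makes true *)
Definition state_form (V : {fset nat}) (x : V -> bool) : form :=
  foldr (fun n acc => FAnd (if extb x n then FVar n else FNot (FVar n)) acc)
        FTrue (enum_fset V).

Definition state_vec (V : {fset nat}) (x : V -> bool) : V -> R :=
  fun i => (x i)%:R.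

Definition neglog (p : R) : \bar R := if p == 0 then +oo%E else (- ln p)%:E.

Definition perm_var (V : {fset nat}) (pi : {perm V}) (n : nat) : nat :=
  match (insub n : option V) with Some y => val (pi y) | None => n end.

(* pi(p): the vector whose pi(i)-th entry is p_i *)
Definition perm_vec (V : {fset nat}) (pi : {perm V}) (p : V -> R) : V -> R :=
  fun j => p ((pi^-1)%g j).

(* L takes values in R u {+oo} *)
Definition Ax0 (L : lossfun) : Prop :=
  forall (V : {fset nat}) (p : V -> R) a, in01 p -> over V a -> L V p a != -oo%E.

Definition A1 (L : lossfun) : Prop :=
  forall (V : {fset nat}) (p : V -> R), in01 p -> L V p FTrue = 0%E.

Definition A2 (L : lossfun) : Prop :=
  forall (X Y : {fset nat}) (p : X -> R) (q : Y -> R) a b,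
    [disjoint X & Y] -> in01 p -> in01 q -> over X a -> over Y b ->
    L (X `|` Y) (concat p q) (FAnd a b) = (L X p a + L Y q b)%E.

Definition A3 (L : lossfun) : Prop :=
  forall (V : {fset nat}) (p : V -> R) a b, in01 p -> over V a -> over V b ->
    entails a b -> (L V p b <= L V p a)%E.

Definition A4 (L : lossfun) : Prop :=
  forall (V : {fset nat}) (x : V -> bool), L V (state_vec x) (state_form x) = 0%E.

Definition A5 (L : lossfun) : Prop :=
  forall X : nat, exists K K' : R, forall pv : R, 0 <= pv <= 1 ->
    L [fset X] (fun _ => pv) (FVar X) = (K%:E * neglog pv)%E /\
    L [fset X] (fun _ => pv) (FNot (FVar X)) = (K'%:E * neglog (1 - pv))%E.

Definition A6 (L : lossfun) : Prop :=
  forall (V : {fset nat}) (p : V -> R) a, in01 p -> over V a ->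
    L V p a = L V (fun i => 1 - p i) (negvars a).

Definition A7 (L : lossfun) : Prop :=
  forall (V : {fset nat}) (p : V -> R) (pi : {perm V}) a, in01 p -> over V a ->
    L V p a = L V (perm_vec pi p) (rename (perm_var pi) a).

End Vectors.

(* Main.v *)
Require Import Defs.
From HB Require Import structures.
From mathcomp Require Import all_boot all_order all_algebra.
From mathcomp Require Import finmap fingroup perm.
From mathcomp Require Import all_classical all_reals all_analysis.

Import Order.TTheory GRing.Theory Num.Theory.
Local Open Scope ring_scope.
Local Open Scope fset_scope.

Lemma Lext (R : realType) (L : lossfun R) (V W : {fset nat}) (p : V -> R) (q : W -> R) a :
  V = W -> (forall (i : V) (j : W), val i = val j -> p i = q j) -> L V p a = L W q a.
Proof. move=> E; subst W => H; congr (L _ _ _); apply: funext => i; exact: H. Qed.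

Lemma ext_f (R : realType) (X : {fset nat}) (f : nat -> R) n :
  ext (fun i : X => f (val i)) n = if n \in X then f n else 0.
Proof. by rewrite /ext; case: insubP => [u -> <- //|/negbTE ->]. Qed.

Lemma ext_cst (R : realType) (X : {fset nat}) (h : R) n :
  n \in X -> ext (fun _ : X => h) n = h.
Proof. by rewrite /ext; case: insubP => [//|/negP]. Qed.

Lemma neglog_ge0 (R : realType) (p : R) : 0 <= p <= 1 -> (0 <= neglog p)%E.
Proof.
move=> /andP[_ p1]; rewrite /neglog; case: ifP => // _.
by rewrite lee_fin oppr_ge0 ln_le0.
Qed.

Definition spec {R : realType} (L : lossfun R) n (K K' : R) :=
  forall pv : R, 0 <= pv <= 1 ->
    L [fset n] (fun _ => pv) (FVar n) = (K%:E * neglog pv)%E /\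
    L [fset n] (fun _ => pv) (FNot (FVar n)) = (K'%:E * neglog (1 - pv))%E.

Lemma half_in (R : realType) : 0 <= (2^-1 : R) <= 1.
Proof. by rewrite invr_ge0 ler0n /= invf_le1 // ler1n. Qed.

Lemma neglog_half (R : realType) : exists c : R, c != 0 /\ neglog (2^-1 : R) = c%:E.
Proof.
exists (- ln (2^-1 : R)); rewrite /neglog invr_eq0 pnatr_eq0 /=; split => //.
rewrite oppr_eq0 lt_eqF // ln_lt0 // invr_gt0 ltr0n /= invf_lt1 // ltr1n //.
Qed.

Lemma const_eq (R : realType) (K1 K2 : R) :
  (K1%:E * neglog (2^-1 : R) = K2%:E * neglog (2^-1 : R))%E -> K1 = K2.
Proof.
have [c [c0 ->]] := neglog_half R.
rewrite -!EFinM => -[] /(mulIf c0) //.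
Qed.

Lemma KK' (R : realType) (L : lossfun R) n K K' : A6 L -> spec L n K K' -> K = K'.
Proof.
move=> h6 sp; rewrite /A6 in h6.
have := h6 [fset n] (fun _ => 2^-1) (FVar n) (fun _ => half_in R).
have ov : Defs.over [fset n] (FVar n) by move=> x; rewrite /= inE => /eqP ->; rewrite in_fset1.
move=> /(_ ov).
have [-> _] := sp _ (half_in R).
have h' : 0 <= 1 - (2^-1 : R) <= 1.
  have := half_in R => /andP[a b]; apply/andP; split; [by rewrite subr_ge0 | by rewrite lerBlDr lerDl].
have [_ ->] := sp _ h'.
by rewrite subKr; apply: const_eq.
Qed.
Lemma over1 n : Defs.over [fset n] (FVar n).
Proof. by move=> x; rewrite /= inE => /eqP ->; rewrite in_fset1. Qed.

Lemma overT V : Defs.over V FTrue.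
Proof. by []. Qed.

Lemma cst_in01 (R : realType) (V : {fset nat}) : in01 (fun _ : V => (2^-1 : R)).
Proof. by move=> _; apply: half_in. Qed.

Lemma Kswap (R : realType) (L : lossfun R) n m Kn Kn' Km Km' :
  A1 L -> A2 L -> A7 L -> n != m -> spec L n Kn Kn' -> spec L m Km Km' -> Kn = Km.
Proof.
move=> h1 h2 h7 nm sn sm; rewrite /A1 in h1; rewrite /A2 in h2; rewrite /A7 in h7.
set h : R := 2^-1.
have dnm : [disjoint [fset n] & [fset m]] by rewrite fdisjoint1X in_fset1.
have dmn : [disjoint [fset m] & [fset n]] by rewrite fdisjoint1X in_fset1 eq_sym.
have e1 := h2 _ _ (fun _ => h) (fun _ => h) _ _ dnm (cst_in01 _ _) (cst_in01 _ _) (over1 n) (overT _).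
have e3 := h2 _ _ (fun _ => h) (fun _ => h) _ _ dmn (cst_in01 _ _) (cst_in01 _ _) (over1 m) (overT _).
rewrite (h1 _ _ (cst_in01 _ _)) addr0 in e1.
rewrite (h1 _ _ (cst_in01 _ _)) addr0 in e3.
have [e1' _] := sn _ (half_in R).
have [e3' _] := sm _ (half_in R).
rewrite e1' in e1; rewrite e3' in e3.
set V := [fset n] `|` [fset m].
have nV : n \in V by rewrite !inE eqxx.
have mV : m \in V by rewrite !inE eqxx orbT.
have ov : Defs.over V (FAnd (FVar n) FTrue).
  by move=> x; rewrite /= inE => /eqP ->.
have e2 := h7 V (fun _ => h) (tperm [` nV] [` mV]) _ (cst_in01 _ _) ov.
have pv : perm_var (tperm [` nV] [` mV]) n = m.
  by rewrite /perm_var insubT /=; rewrite (_ : Sub n nV = [` nV]) // tpermL.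
rewrite /= pv in e2.
apply: const_eq; rewrite -e1 -e3.
rewrite (@Lext _ L _ V _ (fun _ => h)); last first.
- move=> i j _; rewrite /concat; case: ifP => H; first by rewrite ext_cst.
  by rewrite ext_cst //; move: (fsvalP i); rewrite in_fsetU H.
- by [].
rewrite e2 /perm_vec.
apply: Lext; first by rewrite /V fsetUC.
move=> i j _; rewrite /concat; case: ifP => H; first by rewrite ext_cst.
by rewrite ext_cst //; move: (fsvalP j); rewrite in_fsetU H.
Qed.

Definition sf (b : nat -> bool) (s : seq nat) : Defs.form :=
  foldr (fun n acc => FAnd (if b n then FVar n else FNot (FVar n)) acc) FTrue s.

Lemma vars_sf b s x : x \in vars (sf b s) -> x \in s.
Proof.
elim: s => [//|n s IH]; rewrite /= mem_cat in_cons.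
by case: (b n); rewrite /= ?inE => /orP[->//|/IH ->]; rewrite orbT.
Qed.

Lemma main (R : realType) (L : lossfun R) (K : R) (b : nat -> bool) (f : nat -> R) :
  A1 L -> A2 L -> (forall n, spec L n K K) -> (forall n, 0 <= f n <= 1) ->
  forall s, uniq s -> forall W : {fset nat}, W =i s ->
  L W (fun i => f (val i)) (sf b s) =
    (K%:E * (\sum_(n <- s | b n) neglog (f n) + \sum_(n <- s | ~~ b n) neglog (1 - f n)))%E.
Proof.
move=> h1 h2 sp hf; rewrite /A1 in h1; rewrite /A2 in h2.
have hin : forall V : {fset nat}, in01 (fun i : V => f (val i)) by move=> V i; exact: hf.
elim => [|n s IH] /= Hu W HW.
  have -> : W = fset0 by apply/fsetP => x; rewrite HW in_fset0.
  by rewrite h1 // !big_nil addr0 mule0.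
move/andP: Hu => [ns us].
set W' := seq_fset tt s.
rewrite (@Lext _ L _ ([fset n] `|` W') _ (concat (fun i => f (val i)) (fun i => f (val i)))); last first.
- move=> i j eij; rewrite /concat -eij ext_f; case: ifP => H; first by rewrite H.
  rewrite ext_f; have := fsvalP i; rewrite HW inE; move: H; rewrite in_fset1 => /negbT H.
  by rewrite (negbTE H) /= /W' seq_fsetE => ->.
- by apply/fsetP => x; rewrite HW in_fsetU in_fset1 /W' seq_fsetE inE.
rewrite h2 //; last first.
- by move=> x /vars_sf; rewrite /W' seq_fsetE.
- by case: (b n) => x; rewrite /= inE => /eqP ->; rewrite in_fset1.
- by rewrite fdisjoint1X /W' seq_fsetE.
rewrite (IH us W'); last exact: seq_fsetE.
have -> : (fun i : [fset n] => f (val i)) = (fun _ => f n).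
  by apply: funext => -[y hy] /=; move: hy; rewrite in_fset1 => /eqP ->.
have hfn := hf n.
have hfn' : 0 <= 1 - f n <= 1.
  by move/andP: hfn => [a c]; apply/andP; split; [rewrite subr_ge0 | rewrite lerBlDr lerDl].
have [e1 e2] := sp n _ hfn.
have S1 : (0 <= \sum_(n <- s | b n) neglog (f n))%E.
  by apply: sume_ge0 => t _; apply: neglog_ge0.
have S2 : (0 <= \sum_(n <- s | ~~ b n) neglog (1 - f n))%E.
  by apply: sume_ge0 => t _; apply: neglog_ge0; move/andP: (hf t) => [a c];
     apply/andP; split; [rewrite subr_ge0 | rewrite lerBlDr lerDl].
rewrite !big_cons; case: (b n) => /=.
- rewrite e1 -ge0_muleDr ?adde_ge0 ?neglog_ge0 //; congr (_ * _)%E; exact: addeA.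
- rewrite e2 -ge0_muleDr ?adde_ge0 ?neglog_ge0 //; congr (_ * _)%E; exact: addeCA.
Qed.

Arguments KK' {R L n K K'}.
Arguments Kswap {R L n m Kn Kn' Km Km'}.
Arguments main {R L K b f}.

Theorem lemma1 (R : realType) (L : lossfun R) :
  Ax0 L -> A1 L -> A2 L -> A3 L -> A4 L -> A5 L -> A6 L -> A7 L ->
  exists K : R, forall (V : {fset nat}) (x : V -> bool) (p : V -> R),
    in01 p ->
    L V p (state_form x) =
      (K%:E * (\sum_(i : V | x i) neglog (p i)
               + \sum_(i : V | ~~ x i) neglog (1 - p i)))%E.
Proof.
move=> _ h1 h2 _ _ h5 h6 h7.
have [K0 [K0' s0]] := h5 0%N.
exists K0.
have spK : forall n, spec L n K0 K0.
  move=> n; have [Kn [Kn' sn]] := h5 n.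
  have e1 := KK' h6 sn.
  have e2 : Kn = K0.
    have [e|nz] := eqVneq n 0%N.
      subst n; apply: const_eq; have [<- _] := sn _ (half_in R); by have [<- _] := s0 _ (half_in R).
    exact: (Kswap h1 h2 h7 nz sn s0).
  by rewrite -e2 {2}e1.
move=> V x p hp.
have -> : p = (fun i => ext p (val i)) by apply: funext => i; rewrite /ext valK.
have hf : forall n, 0 <= ext p n <= 1.
  by move=> n; rewrite /ext; case: insubP => [u _ _|_]; [exact: hp | by rewrite lexx ler01].
have := main (b := extb x) h1 h2 spK hf (enum_fset V) (fset_uniq V) V (fun _ => erefl).
rewrite /sf => ->.
rewrite !big_seq_fsetE /=.
congr (_ * (_ + _))%E; apply: eq_bigl => i; by rewrite /extb valK.
Qed.
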